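(* For every two hereditary class properties $\Pi_1$ and $\Pi_2$, \[(\Pi_1\cap\Pi_2)^+=\Pi_1^+\cap\Pi_2^+\qquad\text{and}\qquad(\Pi_1\cap\Pi_2)^\ast=\Pi_1^\ast\cap\Pi_2^\ast.\] In particular, for hereditary class properties $\Pi,\Lambda_1,\Lambda_2$: $\Pi=\Lambda_1^+=\Lambda_2^+$ implies $\Pi=(\Lambda_1\cap\Lambda_2)^+$, and $\Pi=\Lambda_1^\ast=\Lambda_2^\ast$ implies $\Pi=(\Lambda_1\cap\Lambda_2)^\ast$.
   Context: Graphs are finite and simple. A hereditary class is a class closed under isomorphism and induced subgraphs; a hereditary class property is a set $\Pi$ of hereditary classes such that $\mathscr C\in\Pi$, $\mathscr D$ hereditary, $\mathscr D\subseteq\mathscr C$ imply $\mathscr D\in\Pi$. For non-decreasing $f$ and positive integer $p$, $\mathscr C$ has an $f$-bounded $\Pi$-decomposition with parameter $p$ if there is $\mathscr D_p\in\Pi$ such that every $G\in\mathscr C$ has a partition $V_1,\dots,V_N$ of $V(G)$ with $N\le f(|G|)$ and $G[V_{i_1}\cup\dots\cup V_{i_p}]\in\mathscr D_p$ for all $i_1,\dots,i_p\in[N]$. $\Pi^+$ (resp. $\Pi^\ast$) is the set of hereditary classes that, for every positive integer $p$, have an $f$-bounded $\Pi$-decomposition with parameter $p$ for some constant function $f$ (resp. some non-decreasing $f$ with $f(n)=n^{o(1)}$). *)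

(* Defs.v *)
From mathcomp Require Import all_boot.
Set Implicit Arguments. Unset Strict Implicit. Unset Printing Implicit Defensive.

Record graph := Graph {
  gn : nat;
  gadj : rel 'I_gn;
  gsym : symmetric gadj;
  girr : irreflexive gadj }.
Arguments gadj : clear implicits.

Definition gsize (G : graph) : nat := gn G.

Definition isomorphic (G H : graph) : Prop :=
  exists f : 'I_(gn G) -> 'I_(gn H),
    bijective f /\ forall x y, gadj H (f x) (f y) = gadj G x y.

Definition induced_adj (G : graph) (X : {set 'I_(gn G)}) : rel 'I_#|X| :=
  fun i j => gadj G (enum_val i) (enum_val j).

Lemma induced_sym G X : symmetric (@induced_adj G X).
Proof. by move=> i j; rewrite /induced_adj gsym. Qed.

Lemma induced_irr G X : irreflexive (@induced_adj G X).
Proof. by move=> i; rewrite /induced_adj girr. Qed.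

Definition induced (G : graph) (X : {set 'I_(gn G)}) : graph :=
  Graph (@induced_sym G X) (@induced_irr G X).

Definition gclass := graph -> Prop.

Definition hereditary (C : gclass) : Prop :=
  (forall G H, isomorphic G H -> C G -> C H) /\
  (forall G (X : {set 'I_(gn G)}), C G -> C (@induced G X)).

Definition cprop := gclass -> Prop.

Definition hered_prop (Pi : cprop) : Prop :=
  (forall C, Pi C -> hereditary C) /\
  (forall C D, Pi C -> hereditary D -> (forall G, D G -> C G) -> Pi D).

Definition cprop_cap (P1 P2 : cprop) : cprop := fun C => P1 C /\ P2 C.

Definition cprop_eq (P1 P2 : cprop) : Prop := forall C, P1 C <-> P2 C.

(** A partition V_1,...,V_N of V(G) is encoded by the map sending each vertex
    to the index of its part (parts may be empty). *)
Definition part_union (G : graph) (N p : nat) (part : 'I_(gn G) -> 'I_N)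
    (idx : 'I_p -> 'I_N) : {set 'I_(gn G)} :=
  [set v | part v \in codom idx].

Definition has_decomp (Pi : cprop) (f : nat -> nat) (p : nat) (C : gclass) : Prop :=
  exists Dp : gclass, Pi Dp /\
    forall G, C G ->
      exists N : nat, N <= f (gsize G) /\
      exists part : 'I_(gn G) -> 'I_N,
        forall idx : 'I_p -> 'I_N, Dp (@induced G (part_union part idx)).

Definition nondecreasing (f : nat -> nat) : Prop := forall m n, m <= n -> f m <= f n.

(** f(n) = n^{o(1)}: for every k >= 1, eventually f(n)^k <= n
    (i.e. f(n) <= n^{1/k} for all large n). *)
Definition subpoly (f : nat -> nat) : Prop :=
  forall k, 0 < k -> exists n0, forall n, n0 <= n -> f n ^ k <= n.

Definition plus_op (Pi : cprop) : cprop := fun C =>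
  hereditary C /\
  forall p, 0 < p -> exists c : nat, has_decomp Pi (fun _ => c) p C.

Definition star_op (Pi : cprop) : cprop := fun C =>
  hereditary C /\
  forall p, 0 < p -> exists f : nat -> nat,
    nondecreasing f /\ subpoly f /\ has_decomp Pi f p C.

(* Main.v *)
Require Import Defs.
From mathcomp Require Import all_boot.
Set Implicit Arguments. Unset Strict Implicit.

Section Sub.
Variables (G : graph) (X Y : {set 'I_(gn G)}).
Hypothesis sXY : X \subset Y.
Let X' : {set 'I_#|Y|} := [set i | enum_val i \in X].
Let Hin (i : 'I_#|X'|) : enum_val (enum_val i) \in X.
Proof. by have := enum_valP i; rewrite inE. Qed.
Let f (i : 'I_#|X'|) : 'I_#|X| := enum_rank_in (Hin i) (enum_val (enum_val i)).
Let fK i : enum_val (f i) = enum_val (enum_val i).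
Proof. by rewrite /f enum_rankK_in // Hin. Qed.

Lemma iso_sub : isomorphic (@induced (@induced G Y) X') (@induced G X).
Proof.
exists f; split; last first.
  by move=> x y /=; rewrite /induced_adj /= !fK.
have finj : injective f.
  by move=> x y /(congr1 enum_val); rewrite !fK => /enum_val_inj/enum_val_inj.
apply: (inj_card_bij finj).
rewrite !card_ord -(card_imset X' (@enum_val_inj _ (mem Y))).
apply: subset_leq_card; apply/subsetP => x xX.
have xY : x \in Y by apply: (subsetP sXY).
apply/imsetP; exists (enum_rank_in xY x); last by rewrite enum_rankK_in.
by rewrite inE enum_rankK_in.
Qed.
End Sub.

Lemma hered_sub (D : gclass) G (X Y : {set 'I_(gn G)}) :
  hereditary D -> X \subset Y -> D (@induced G Y) -> D (@induced G X).
Proof.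
move=> [Hiso Hind] sXY HY.
apply: Hiso (iso_sub sXY) _; exact: Hind.
Qed.

Lemma hered_cap (D1 D2 : gclass) : hereditary D1 -> hereditary D2 ->
  hereditary (fun G => D1 G /\ D2 G).
Proof.
move=> [i1 s1] [i2 s2]; split.
  by move=> G H GH [a b]; split; [apply: i1 GH a | apply: i2 GH b].
by move=> G X [a b]; split; [apply: s1 | apply: s2].
Qed.

Lemma decomp_cap Pi1 Pi2 f1 f2 p C :
  hered_prop Pi1 -> hered_prop Pi2 -> has_decomp Pi1 f1 p C ->
  has_decomp Pi2 f2 p C ->
  has_decomp (cprop_cap Pi1 Pi2) (fun n => f1 n * f2 n) p C.
Proof.
move=> [h1 c1] [h2 c2] [D1 [P1 H1]] [D2 [P2 H2]].
have hD1 := h1 _ P1; have hD2 := h2 _ P2.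
exists (fun G => D1 G /\ D2 G); split.
  split; [apply: c1 P1 _ _ | apply: c2 P2 _ _];
    try exact: hered_cap; by move=> G [].
move=> G CG.
have [N1 [le1 [part1 Hp1]]] := H1 G CG.
have [N2 [le2 [part2 Hp2]]] := H2 G CG.
exists #|{: 'I_N1 * 'I_N2}|; split.
  by rewrite card_prod !card_ord leq_mul.
exists (fun v => enum_rank (part1 v, part2 v)) => idx.
split.
- apply: (hered_sub hD1 _ (Hp1 (fun i => (enum_val (idx i)).1))).
  apply/subsetP => v; rewrite !inE => /codomP [i Ei].
  by apply/codomP; exists i; rewrite -Ei enum_rankK.
- apply: (hered_sub hD2 _ (Hp2 (fun i => (enum_val (idx i)).2))).
  apply/subsetP => v; rewrite !inE => /codomP [i Ei].
  by apply/codomP; exists i; rewrite -Ei enum_rankK.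
Qed.

Lemma decomp_mono (Pi1 Pi2 : cprop) f p C : (forall D, Pi1 D -> Pi2 D) ->
  has_decomp Pi1 f p C -> has_decomp Pi2 f p C.
Proof. by move=> H [D [PD HD]]; exists D; split; [apply: H|]. Qed.

Lemma cap_eq Pi1 Pi2 : hered_prop Pi1 -> hered_prop Pi2 ->
     cprop_eq (plus_op (cprop_cap Pi1 Pi2)) (cprop_cap (plus_op Pi1) (plus_op Pi2)) /\
     cprop_eq (star_op (cprop_cap Pi1 Pi2)) (cprop_cap (star_op Pi1) (star_op Pi2)).
Proof.
move=> hP1 hP2; split=> C; split.
- move=> [hC H]; split; split=> // p p0; have [c Hc] := H p p0; exists c.
    by apply: decomp_mono Hc => D [].
  by apply: decomp_mono Hc => D [].
- move=> [[hC H1] [_ H2]]; split=> // p p0.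
  have [c1 d1] := H1 p p0; have [c2 d2] := H2 p p0.
  by exists (c1 * c2); apply: (decomp_cap hP1 hP2 d1 d2).
- move=> [hC H]; split; split=> // p p0; have [f [nf [sf Hc]]] := H p p0;
    exists f; (do 2 split => //); by apply: decomp_mono Hc => D [].
- move=> [[hC H1] [_ H2]]; split=> // p p0.
  have [f1 [n1 [s1 d1]]] := H1 p p0; have [f2 [n2 [s2 d2]]] := H2 p p0.
  exists (fun n => f1 n * f2 n); split; last split.
  + by move=> m n mn; apply: leq_mul; [apply: n1 | apply: n2].
  + move=> k k0.
    have k20 : 0 < k * 2 by rewrite muln_gt0 k0.
    have [m1 Hm1] := s1 _ k20; have [m2 Hm2] := s2 _ k20.
    exists (maxn m1 m2) => n; rewrite geq_max => /andP [l1 l2].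
    rewrite -(leq_exp2r _ _ (isT : 0 < 2)) -expnM expnMn expnS expn1.
    by apply: leq_mul; [apply: Hm1 | apply: Hm2].
  + exact: (decomp_cap hP1 hP2 d1 d2).
Qed.

Theorem mainTheorem10 :
  (forall Pi1 Pi2 : cprop, hered_prop Pi1 -> hered_prop Pi2 ->
     cprop_eq (plus_op (cprop_cap Pi1 Pi2)) (cprop_cap (plus_op Pi1) (plus_op Pi2)) /\
     cprop_eq (star_op (cprop_cap Pi1 Pi2)) (cprop_cap (star_op Pi1) (star_op Pi2))) /\
  (forall Pi L1 L2 : cprop, hered_prop Pi -> hered_prop L1 -> hered_prop L2 ->
     (cprop_eq Pi (plus_op L1) -> cprop_eq Pi (plus_op L2) ->
        cprop_eq Pi (plus_op (cprop_cap L1 L2))) /\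
     (cprop_eq Pi (star_op L1) -> cprop_eq Pi (star_op L2) ->
        cprop_eq Pi (star_op (cprop_cap L1 L2)))).
Proof.
split; first exact: cap_eq.
move=> Pi L1 L2 _ h1 h2; have [e1 e2] := cap_eq h1 h2; split.
- move=> E1 E2 C; split.
    by move=> x; apply/(e1 C).2; split; [apply/E1|apply/E2].
  by move=> y; have [a _] := (e1 C).1 y; apply/E1.
- move=> E1 E2 C; split.
    by move=> x; apply/(e2 C).2; split; [apply/E1|apply/E2].
  by move=> y; have [a _] := (e2 C).1 y; apply/E1.
Qed.
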